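(* Let $\mathcal P=\mathcal P(V,R)$ be a binary quadratic operad over a field $\Bbbk$ with $V\neq0$. Then the dendriform splitting operad $\mathrm{pre}\,\mathcal P=\mathrm{preLie}\bullet\mathcal P$ does not satisfy the Dong Property.
   Context: A binary quadratic operad $\mathcal P(V,R)$ is generated by a finite-dimensional $S_2$-module $V$ of binary operations with relations $R\subseteq\mathcal F_V(3)$ ($\mathcal F_V$ the free operad). $\mathrm{preLie}$ is the operad of pre-Lie (left-symmetric) algebras and $\bullet$ denotes the Manin black product of binary quadratic operads (Ginzburg–Kapranov). Formal distributions and the Dong Property: for an algebra $A$ with a family of bilinear operations closed under the $S_2$-action, a formal distribution over $A$ is $a(z)=\sum_{s\in\mathbb Z}a(s)z^{-s-1}$, $a(s)\in A$. Distributions $a,b$ are local if for every operation $*$ there is $N\ge0$ with $(w-z)^N a(w)*b(z)=0$ in $A[[z^{\pm1},w^{\pm1}]]$. For $n\in\mathbb Z_+$ the $n$-product is $(a\,{*}_{(n)}\,b)(w)=\mathrm{Res}_{\xi=0}(\xi-w)^n a(\xi)*b(w)$. An operad satisfies the Dong Property if for every algebra $A$ over it and every three pairwise local distributions $a,b,c$ over $A$, $(a\,{*}_{(n)}\,b)$ and $c$ are local for all $n\in\mathbb Z_+$ and all operations $*$. *)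

(* Defs.v *)
From HB Require Import structures.
From mathcomp Require Import all_boot all_order all_algebra.
Set Implicit Arguments. Unset Strict Implicit. Unset Printing Implicit Defensive.
Import GRing.Theory.
Local Open Scope ring_scope.

(* V is given with a basis indexed by the finite type [gen]; the S_2-action
   (12) on V is the matrix [tau] : e_i . (12) = sum_j tau i j e_j.
   F_V(3) is identified with three copies of V (x) V, one for each tree shape
     shape 0 : mu(nu(x1,x2),x3),  shape 1 : mu(nu(x2,x3),x1),
     shape 2 : mu(nu(x3,x1),x2);
   an element r : tree3 gen K has coefficient r s i j on the tree of shape s
   with outer operation e_i and inner operation e_j.  (Every tree in F_V(3)
   is uniquely written this way using the S_2-action.) *)
Definition tree3 (I : finType) (K : fieldType) := 'I_3 -> I -> I -> K.

Record bqop (K : fieldType) := BQOp {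
  gen : finType;
  tau : gen -> gen -> K;
  rel : tree3 gen K -> Prop }.
Arguments gen {K} b.
Arguments tau {K} b _ _.
Arguments rel {K} b _.

Section Trees.
Variables (K : fieldType) (I : finType) (t : I -> I -> K).

Definition t3add (r r' : tree3 I K) : tree3 I K := fun s i j => r s i j + r' s i j.
Definition t3scale (k : K) (r : tree3 I K) : tree3 I K := fun s i j => k * r s i j.
Definition t3zero : tree3 I K := fun _ _ _ => 0.

(* action of the 3-cycle x1 -> x2 -> x3 -> x1 *)
Definition t3cyc (r : tree3 I K) : tree3 I K := fun s =>
  match val s with 0%N => r (inord 2) | 1%N => r (inord 0) | _ => r (inord 1) end.
(* action of the transposition x1 <-> x2 *)
Definition t3swap (r : tree3 I K) : tree3 I K := fun s i k =>
  let s' := match val s with 0%N => inord 0 | 1%N => inord 2 | _ => inord 1 end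
            : 'I_3 in
  \sum_j r s' i j * t j k.
End Trees.

Definition is_bqop (K : fieldType) (P : bqop K) : Prop :=
  (forall i k : gen P, \sum_j tau P i j * tau P j k = (i == k)%:R) /\
  rel P (@t3zero K (gen P)) /\
  (forall r r', rel P r -> rel P r' -> rel P (t3add r r')) /\
  (forall k r, rel P r -> rel P (t3scale k r)) /\
  (forall r, rel P r -> rel P (t3cyc r)) /\
  (forall r, rel P r -> rel P (t3swap (tau P) r)).

(* V = K[S_2], basis e_0 : (x,y) |-> x y,  e_1 = e_0.(12) : (x,y) |-> y x *)
Definition preLie_tau (K : fieldType) (i j : 'I_2) : K := (i != j)%:R.
(* the left-symmetry relator
   (x1x2)x3 - x1(x2x3) - (x2x1)x3 + x2(x1x3) *)
Definition preLie_relator (K : fieldType) : tree3 'I_2 K := fun s i j =>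
  match val s, val i, val j with
  | 0%N, 0%N, 0%N => 1
  | 0%N, 0%N, 1%N => -1
  | 1%N, 1%N, 0%N => -1
  | 2%N, 1%N, 1%N => 1
  | _, _, _ => 0
  end.
(* a spanning set of the S_3-submodule generated by the relator *)
Definition preLie_rel (K : fieldType) (r : tree3 'I_2 K) : Prop :=
  exists (k : 'I_3) (b : bool),
    r = (if b then @t3swap K _ (@preLie_tau K) else id)
          (iter k (@t3cyc K _) (@preLie_relator K)).
Definition preLie (K : fieldType) : bqop K :=
  @BQOp K 'I_2 (@preLie_tau K) (@preLie_rel K).

(* P . Q = F(V_P (x) V_Q (x) sgn) / (Phi(R_P (x) R_Q)), Phi shape-wise. *)
Definition black_phi (K : fieldType) (I J : finType) (r : tree3 I K)
  (q : tree3 J K) : tree3 (I * J)%type K :=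
  fun s ip jq => r s ip.1 jq.1 * q s ip.2 jq.2.
Definition black (K : fieldType) (P Q : bqop K) : bqop K :=
  @BQOp K (gen P * gen Q)%type
    (fun ip jq => - (tau P ip.1 jq.1 * tau Q ip.2 jq.2))
    (fun t => exists r q, rel P r /\ rel Q q /\ t = black_phi r q).

Definition preOp (K : fieldType) (P : bqop K) : bqop K := black (preLie K) P.

Section Algebras.
Variables (K : fieldType) (I : finType) (A : lmodType K).
Variable m : I -> A -> A -> A.

Definition bilin (f : A -> A -> A) : Prop :=
  (forall (k : K) x y z, f (k *: x + y) z = k *: f x z + f y z) /\
  (forall (k : K) x y z, f z (k *: x + y) = k *: f z x + f z y).

Definition tree_eval (r : tree3 I K) (x1 x2 x3 : A) : A :=
  \sum_i \sum_j (r (inord 0) i j *: m i (m j x1 x2) x3 +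
                 r (inord 1) i j *: m i (m j x2 x3) x1 +
                 r (inord 2) i j *: m i (m j x3 x1) x2).

Definition opv (v : I -> K) (a b : A) : A := \sum_i v i *: m i a b.

(* formal distributions a(z) = sum_s a(s) z^{-s-1}, represented by s |-> a(s) *)
(* (w-z)^N a(w) * b(z) = 0, coefficientwise *)
Definition local (a b : int -> A) : Prop :=
  forall v : I -> K, exists N : nat, forall s u : int,
    \sum_(k < N.+1) (((-1) ^+ k * ('C(N, k))%:R) *:
       opv v (a (s + Posz (N - k)%N)) (b (u + Posz k))) = 0.

Definition nprod (v : I -> K) (n : nat) (a b : int -> A) : int -> A :=
  fun u => \sum_(k < n.+1) (((-1) ^+ k * ('C(n, k))%:R) *:
       opv v (a (Posz (n - k)%N)) (b (u + Posz k))).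
End Algebras.

Definition is_algebra (K : fieldType) (P : bqop K) (A : lmodType K)
  (m : gen P -> A -> A -> A) : Prop :=
  (forall i, bilin (m i)) /\
  (forall i a b, m i b a = \sum_j tau P i j *: m j a b) /\
  (forall r, rel P r -> forall x1 x2 x3, tree_eval m r x1 x2 x3 = 0).

Definition Dong_property (K : fieldType) (P : bqop K) : Prop :=
  forall (A : lmodType K) (m : gen P -> A -> A -> A), @is_algebra K P A m ->
  forall a b c : int -> A, local m a b -> local m b c -> local m a c ->
  forall (v : gen P -> K) (n : nat), local m (nprod m v n a b) c.

(* Main.v *)
Require Import Defs.
From mathcomp Require Import all_boot all_order all_algebra.
From mathcomp Require Import ring.
Set Implicit Arguments. Unset Strict Implicit. Unset Printing Implicit Defensive.
Import GRing.Theory.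
Local Open Scope ring_scope.

Definition o0 : 'I_5 := @Ordinal 5 0 isT.
Definition o1 : 'I_5 := @Ordinal 5 1 isT.
Definition o2 : 'I_5 := @Ordinal 5 2 isT.
Definition o3 : 'I_5 := @Ordinal 5 3 isT.
Definition o4 : 'I_5 := @Ordinal 5 4 isT.

Definition mu (K : fieldType) (e : K) (x y : 'rV[K]_5) : 'rV[K]_5 :=
  \row_j (if j == o3 then x 0 o0 * y 0 o1 - e * (x 0 o1 * y 0 o0)
          else if j == o4 then x 0 o3 * y 0 o2 else 0).

Lemma mu_addl (K : fieldType) (e k : K) x y z :
  mu e (k *: x + y) z = k *: mu e x z + mu e y z.
Proof. apply/rowP => j; rewrite !mxE; case: ifP => _; [|case: ifP => _]; ring. Qed.
Lemma mu_addr (K : fieldType) (e k : K) x y z :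
  mu e z (k *: x + y) = k *: mu e z x + mu e z y.
Proof. apply/rowP => j; rewrite !mxE; case: ifP => _; [|case: ifP => _]; ring. Qed.
Lemma mu_scalel (K : fieldType) (e k : K) x z :
  mu e (k *: x) z = k *: mu e x z.
Proof. apply/rowP => j; rewrite !mxE; case: ifP => _; [|case: ifP => _]; ring. Qed.
Lemma mu_scaler (K : fieldType) (e k : K) x z :
  mu e z (k *: x) = k *: mu e z x.
Proof. apply/rowP => j; rewrite !mxE; case: ifP => _; [|case: ifP => _]; ring. Qed.
Lemma mu_0r (K : fieldType) (e : K) x : mu e x 0 = 0.
Proof. by have := mu_scaler e 0 0 x; rewrite !scale0r. Qed.
Lemma mu_0l (K : fieldType) (e : K) x : mu e 0 x = 0.
Proof. by have := mu_scalel e 0 0 x; rewrite !scale0r. Qed.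
Lemma mu_C1 (K : fieldType) (e : K) x y z : mu e z (mu e x y) = 0.
Proof. apply/rowP => j; rewrite !mxE /=; case: ifP => _; [|case: ifP => _]; ring. Qed.
Lemma mu_C2 (K : fieldType) (e : K) x y z : e * e = 1 ->
  mu e (mu e y x) z = - e *: mu e (mu e x y) z.
Proof.
move=> he; apply/rowP => j; rewrite !mxE /=; case: ifP => _; [|case: ifP => _]; try ring.
apply/eqP; rewrite -subr_eq0; apply/eqP.
transitivity ((x 0 o1 * y 0 o0) * z 0 o2 * (1 - e * e)); first ring.
by rewrite he subrr mulr0.
Qed.
Definition z2 : 'I_2 := @Ordinal 2 0 isT.
Definition u2 : 'I_2 := @Ordinal 2 1 isT.

Lemma val_inord3 (n : nat) : (n < 3)%N -> val (inord n : 'I_3) = n.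
Proof. by move=> h; rewrite /= inordK. Qed.

Lemma preLie_prop (K : fieldType) (r : tree3 'I_2 K) : preLie_rel r ->
  forall s, \sum_(j < 2) r s z2 j = 0.
Proof.
move=> [[[|[|[|k]]] hk] [b ->]] [[|[|[|s]]] hs] //=; case: b;
rewrite /t3swap /t3cyc /preLie_relator /= ?val_inord3 //=.
all: rewrite ?big_ord_recr ?big_ord0 /= /preLie_tau /=; ring.
Qed.


Lemma eig (K : fieldType) (G : finType) (t : G -> G -> K)
  (inv : forall i k, \sum_j t i j * t j k = (i == k)%:R) (p0 : G) :
  exists (l : G -> K) (e : K) (p1 : G),
    [/\ e * e = 1, l p1 != 0 & forall p, \sum_q t p q * l q = e * l p].
Proof.
have hd : forall p, \sum_q t p q * (q == p0)%:R = t p p0.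
  move=> p; rewrite (bigD1 p0) //= eqxx mulr1 big1 ?addr0 // => q /negbTE ->.
  by rewrite mulr0.
case: (boolP [exists q, t q p0 + (q == p0)%:R != 0]).
  move/existsP=> [p1 hp1]; exists (fun q => t q p0 + (q == p0)%:R), 1, p1.
  split=> // [|p]; first by rewrite mulr1.
  under eq_bigr do rewrite mulrDr.
  by rewrite big_split /= inv hd mul1r addrC.
rewrite negb_exists => /forallP H.
exists (fun q => (q == p0)%:R), (-1), p0; split.
- by rewrite mulrNN mulr1.
- by rewrite eqxx oner_neq0.
- move=> p; rewrite hd; have := H p; rewrite negbK addr_eq0 => /eqP ->.
  by rewrite mulN1r.
Qed.

Definition mm (K : fieldType) (G : finType) (e : K) (l : G -> K)
  (ip : 'I_2 * G) (x y : 'rV[K]_5) : 'rV[K]_5 :=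
  if val ip.1 == 0%N then l ip.2 *: mu e x y else (- e * l ip.2) *: mu e y x.

Lemma mm_comp (K : fieldType) (G : finType) (e : K) (l : G -> K) i j x y z :
  e * e = 1 ->
  mm e l i (mm e l j x y) z =
    ((val i.1 == 0%N)%:R * (l i.2 * l j.2)) *: mu e (mu e x y) z.
Proof.
move=> he; rewrite /mm; case: ifP => _; last first.
  by case: ifP => _; rewrite !mu_scaler mu_C1 !scaler0 mul0r scale0r.
case: ifP => _; first by rewrite mu_scalel scalerA mul1r.
rewrite mu_scalel (mu_C2 _ _ _ he) !scalerA; congr (_ *: _).
transitivity (l i.2 * l j.2 * (e * e)); first ring.
by rewrite he mulr1 mul1r.
Qed.

Lemma sym_ok (K : fieldType) (P : bqop K) (e : K) (l : gen P -> K)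
  (he : e * e = 1) (hT : forall p, \sum_q tau P p q * l q = e * l p) :
  forall (i : gen (preOp P)) (a b : 'rV[K]_5),
  mm e l i b a = \sum_j tau (preOp P) i j *: mm e l j a b.
Proof.
move=> [[[|[|i1]] hi1] p] a b //=.
all: rewrite -(pair_bigA _ (fun j1 j2 => tau (preOp P) (_, p) (j1, j2) *: mm e l (j1, j2) a b)).
all: rewrite big_ord_recr big_ord1 /= /mm /= /preLie_tau /=.
- rewrite big1 ?add0r => [|j _]; last by rewrite mul0r oppr0 scale0r.
  under eq_bigr do rewrite scalerA.
  rewrite -scaler_suml; congr (_ *: _).
  rewrite (eq_bigr (fun j => e * (tau P p j * l j))); last by move=> j _; ring.
  by rewrite -mulr_sumr hT mulrA he mul1r.
- rewrite [X in _ + X]big1 ?addr0 => [|j _]; last by rewrite mul0r oppr0 scale0r.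
  under eq_bigr do rewrite scalerA.
  rewrite -scaler_suml; congr (_ *: _).
  rewrite (eq_bigr (fun j => - (tau P p j * l j))); last by move=> j _; ring.
  by rewrite sumrN hT mulNr.
Qed.

Lemma sum3 (K : fieldType) (I : finType) (A : lmodType K) (a b c : I -> I -> K)
  (X Y Z : A) :
  \sum_i \sum_j (a i j *: X + b i j *: Y + c i j *: Z) =
  (\sum_i \sum_j a i j) *: X + (\sum_i \sum_j b i j) *: Y + (\sum_i \sum_j c i j) *: Z.
Proof.
rewrite !scaler_suml -!big_split /=; apply: eq_bigr => i _.
by rewrite !scaler_suml -!big_split.
Qed.

Lemma coef0 (K : fieldType) (G : finType) (l : G -> K) (r : tree3 'I_2 K)
  (q : tree3 G K) s : preLie_rel r ->
  \sum_(i : 'I_2 * G) \sum_(j : 'I_2 * G)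
     black_phi r q s i j * ((val i.1 == 0%N)%:R * (l i.2 * l j.2)) = 0.
Proof.
move=> hr; rewrite big1 // => -[i1 p] _ /=.
case: (boolP (val i1 == 0%N)) => h; last first.
  by rewrite big1 // => j _; rewrite mul0r mulr0.
have -> : i1 = z2 by apply: val_inj; move/eqP: h.
rewrite -(pair_bigA _ (fun j1 j2 => black_phi r q s (z2, p) (j1, j2) *
   ((val z2 == 0%N)%:R * (l p * l j2)))) /black_phi /=.
rewrite (eq_bigr (fun j1 => r s z2 j1 * \sum_j2 q s p j2 * (1 * (l p * l j2)))).
  by rewrite -mulr_suml preLie_prop // mul0r.
move=> j1 _; rewrite mulr_sumr; apply: eq_bigr => j2 _; ring.
Qed.

Lemma rel_ok (K : fieldType) (G : finType) (e : K) (l : G -> K) (he : e * e = 1)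
  (r : tree3 'I_2 K) (q : tree3 G K) x1 x2 x3 : preLie_rel r ->
  tree_eval (mm e l) (black_phi r q) x1 x2 x3 = 0.
Proof.
move=> hr; rewrite /tree_eval.
under eq_bigr => i _ do under eq_bigr => j _ do rewrite !mm_comp // !scalerA.
by rewrite sum3 !coef0 // !scale0r !addr0.
Qed.

Lemma opv_pt (K : fieldType) (I : finType) (A : lmodType K) (m : I -> A -> A -> A)
  (i0 : I) x y : opv m (fun i => (i == i0)%:R) x y = m i0 x y.
Proof.
rewrite /opv (bigD1 i0) //= eqxx scale1r big1 ?addr0 // => i /negbTE ->.
by rewrite scale0r.
Qed.

Lemma opv0 (K : fieldType) (G : finType) (e : K) (l : G -> K) v x y :
  mu e x y = 0 -> mu e y x = 0 -> opv (mm e l) v x y = 0.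
Proof.
move=> h1 h2; rewrite /opv big1 // => i _; rewrite /mm.
by case: ifP => _; rewrite ?h1 ?h2 !scaler0.
Qed.

Definition e1 (K : fieldType) : 'rV[K]_5 := delta_mx 0 o0.
Definition e2 (K : fieldType) : 'rV[K]_5 := delta_mx 0 o1.
Definition e3 (K : fieldType) : 'rV[K]_5 := delta_mx 0 o2.

Lemma mu13 (K : fieldType) (e : K) : mu e (e1 K) (e3 K) = 0.
Proof. by apply/rowP => j; rewrite !mxE /=; case: ifP => _; [|case: ifP => _]; ring. Qed.
Lemma mu31 (K : fieldType) (e : K) : mu e (e3 K) (e1 K) = 0.
Proof. by apply/rowP => j; rewrite !mxE /=; case: ifP => _; [|case: ifP => _]; ring. Qed.
Lemma mu23 (K : fieldType) (e : K) : mu e (e2 K) (e3 K) = 0.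
Proof. by apply/rowP => j; rewrite !mxE /=; case: ifP => _; [|case: ifP => _]; ring. Qed.
Lemma mu32 (K : fieldType) (e : K) : mu e (e3 K) (e2 K) = 0.
Proof. by apply/rowP => j; rewrite !mxE /=; case: ifP => _; [|case: ifP => _]; ring. Qed.
Lemma mu123 (K : fieldType) (e : K) : mu e (mu e (e1 K) (e2 K)) (e3 K) 0 o4 = 1.
Proof. by rewrite !mxE /=; ring. Qed.

Theorem mainTheorem2 (K : fieldType) (P : bqop K) :
  is_bqop P -> (0 < #|gen P|)%N -> ~ Dong_property (preOp P).
Proof.
move=> [inv _] hc D.
case/card_gt0P: hc => p0 _.
have [l [e [p1 [he hl hT]]]] := eig inv p0.
have alg : is_algebra (mm e l : gen (preOp P) -> 'rV[K]_5 -> _ -> _).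
  split; [|split; [exact: sym_ok|]].
    move=> i; split => k x y z; rewrite /mm; case: ifP => _;
    by rewrite ?mu_addl ?mu_addr scalerDr !scalerA mulrC.
  by move=> t [r [q [hr [hq ->]]]] x1 x2 x3; exact: rel_ok.
pose a := fun _ : int => e1 K.
pose b := fun _ : int => e2 K.
pose c := fun t : int => if t == 0 then e3 K else 0.
have hc0 : forall x, mu e x (e3 K) = 0 -> mu e (e3 K) x = 0 -> forall t, mu e x (c t) = 0 /\ mu e (c t) x = 0.
  move=> x h1 h2 t; rewrite /c; case: eqP => _; first by [].
  by rewrite mu_0r mu_0l.
have hab : local (mm e l) a b.
  move=> v; exists 1%N => s u; rewrite !big_ord_recr big_ord0 /= add0r.
  by rewrite /a /b expr0 expr1 bin0 binn mul1r mulr1 scale1r scaleN1r subrr.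
have hac : local (mm e l) a c.
  move=> v; exists 0%N => s u; rewrite big_ord1 /a.
  by have [h1 h2] := hc0 _ (mu13 e) (mu31 e) (u + 0%N); rewrite opv0 ?scaler0.
have hbc : local (mm e l) b c.
  move=> v; exists 0%N => s u; rewrite big_ord1 /b.
  by have [h1 h2] := hc0 _ (mu23 e) (mu32 e) (u + 0%N); rewrite opv0 ?scaler0.
pose v := fun i : gen (preOp P) => (i == (z2, p1))%:R : K.
have [N HN] := D _ _ alg a b c hab hbc hac v 0%N v.
have := HN 0 0; rewrite big_ord_recl.
rewrite big1 ?addr0; last first.
  move=> i _; rewrite (_ : c _ = 0) ?opv0 ?mu_0r ?mu_0l ?scaler0 //.
rewrite expr0 bin0 mul1r scale1r /c ?add0r eqxx /v opv_pt /nprod big_ord1.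
rewrite expr0 bin0 mul1r scale1r opv_pt /a /b /mm /=.
rewrite mu_scalel scalerA => /(congr1 (fun M : 'rV[K]_5 => M 0 o4)).
by rewrite mxE mu123 mxE mulr1 => /eqP; rewrite mulf_eq0 (negbTE hl).
Qed.
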